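(* Let $r\ge2$, $m>1$ and $1\le t\le 2^m-1$ be integers, and let $\mathcal C$ be a binary linear code with coordinates indexed by $\Omega_t^{(m)}$ such that every row of $H_t^{(m)}$ lies in the dual code $\mathcal C^\perp$. Let $m_0\in[m]$ satisfy $2^{m_0-1}-1<t\le2^{m_0}-1$, and set $t_1=2^{m_0-1}-1$, $t_2=t-t_1-1$, $A=\Omega_{t_1}^{(m)}$, $B=\Omega_t^{(m)}\setminus A$, and for $j\in\mathbb Z_r$, $A_j=\{(i_m,\dots,i_1)\in A: i_{m_0}=j\}$. For $j\in\mathbb Z_{r+1}$ let $\psi_j:\mathbb Z_{r+1}^{m-1}\to\mathbb Z_{r+1}^m$ insert $j$ as the new $m_0$-th coordinate from the right, i.e. $\psi_j(i_{m-1},\dots,i_{m_0},i_{m_0-1},\dots,i_1)=(i_{m-1},\dots,i_{m_0},j,i_{m_0-1},\dots,i_1)$. Then: 1) for each $j\in\mathbb Z_r$, $\psi_j$ restricts to a bijection $\Omega_{t_1}^{(m-1)}\to A_j$, and for every codeword $x\in\mathcal C$ and every $\alpha\in\Omega_{t_1}^{(m-1)}\setminus\Omega_0^{(m-1)}$, $x_{\psi_j(\alpha)}=\sum_{\beta\in\mathcal L^{(m-1)}(\alpha)}x_{\psi_j(\beta)}$ (i.e. the punctured code $\mathcal C|_{A_j}$, re-indexed via $\psi_j$, has a parity-check matrix containing all rows of $H_{t_1}^{(m-1)}$); 2) if $t_2\ge1$, $\psi_r$ restricts to a bijection $\Omega_{t_2}^{(m-1)}\to B$, and for every $x\in\mathcal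 C$ and every $\alpha\in\Omega_{t_2}^{(m-1)}\setminus\Omega_0^{(m-1)}$, $x_{\psi_r(\alpha)}=\sum_{\beta\in\mathcal L^{(m-1)}(\alpha)}x_{\psi_r(\beta)}$ (i.e. $\mathcal C|_B$, re-indexed via $\psi_r$, has a parity-check matrix containing all rows of $H_{t_2}^{(m-1)}$).
   Context: For any $m'\ge1$: $\mathbb Z_r=\{0,\dots,r-1\}\subseteq\mathbb Z_{r+1}=\{0,\dots,r\}$ as sets; elements of $\mathbb Z_{r+1}^{m'}$ are written $\alpha=(i_{m'},\dots,i_1)$, $i_\ell$ being the $\ell$-th coordinate from the right. $\mathbf U^{(m')}(\alpha)=\{\ell: i_\ell=r\}$, $\mathbf T^{(m')}(\alpha)=\{\ell: i_\ell\in\mathbb Z_r\}$, $\mathcal L^{(m')}(\alpha)=\{(j_{m'},\dots,j_1)\in\mathbb Z_r^{m'}: j_\ell=i_\ell\ \forall\ell\in\mathbf T^{(m')}(\alpha)\}$. For $0\le s\le2^{m'}-1$ with binary expansion $s=\sum_\ell\lambda_\ell2^{\ell-1}$, $\mathrm{supp}_{m'}(s)=\{\ell:\lambda_\ell=1\}$; $\Gamma_s^{(m')}=\{\alpha\in\mathbb Z_{r+1}^{m'}:\mathbf U^{(m')}(\alpha)=\mathrm{supp}_{m'}(s)\}$ and $\Omega_s^{(m')}=\bigcup_{\ell=0}^s\Gamma_\ell^{(m')}$. $H_t^{(m')}$ is the binary matrix with rows indexed by $\Omega_t^{(m')}\setminus\Omega_0^{(m')}$, columns by $\Omega_t^{(m')}$,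 entry $(\alpha,\beta)$ equal to $1$ iff $\beta\in\mathcal L^{(m')}(\alpha)\cup\{\alpha\}$. Equivalently, all rows of $H_t^{(m')}$ lie in $\mathcal C^\perp$ iff $x_\alpha=\sum_{\beta\in\mathcal L^{(m')}(\alpha)}x_\beta$ for all $x\in\mathcal C$ and all $\alpha\in\Omega_t^{(m')}\setminus\Omega_0^{(m')}$. *)

(* Defs.v *)
From HB Require Import structures.
From mathcomp Require Import all_boot all_order all_algebra.
Set Implicit Arguments. Unset Strict Implicit. Unset Printing Implicit Defensive.
Import GRing.Theory.
Local Open Scope ring_scope.

(* Conventions: an element (i_m,...,i_1) of Z_{r+1}^m is a finite function
   a : 'I_m -> 'I_(r.+1), where the 1-based coordinate l (from the right)
   is stored at the ordinal l-1.  Z_r is the subset {0,...,r-1} of 'I_(r.+1);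
   the value r is ord_max. *)
Definition Zm (m r : nat) := {ffun 'I_m -> 'I_r.+1}.

Definition Uset m r (a : Zm m r) : {set 'I_m} := [set i | a i == ord_max].
Definition Tset m r (a : Zm m r) : {set 'I_m} := [set i | a i != ord_max].
Definition Lset m r (a : Zm m r) : {set Zm m r} :=
  [set b : Zm m r | [forall i, b i != ord_max] && [forall i, (i \in Tset a) ==> (b i == a i)]].
Definition supp m (s : nat) : {set 'I_m} := [set i : 'I_m | odd (s %/ 2 ^ i)].
Definition Gamma m r (s : nat) : {set Zm m r} := [set a : Zm m r | Uset a == supp m s].
Definition Omega m r (s : nat) : {set Zm m r} := \bigcup_(l < s.+1) Gamma m r l.

Definition Idx m r t := {a : Zm m r | a \in Omega m r t}.
Definition word m r t := {ffun Idx m r t -> 'F_2}.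

(* the coordinate x_alpha of a word (0 if alpha is not a coordinate) *)
Definition xat m r t (x : word m r t) (a : Zm m r) : 'F_2 :=
  if @insub _ (fun a => a \in Omega m r t) (Idx m r t) a is Some i then x i else 0.

Definition Hentry m r (a b : Zm m r) : 'F_2 := (b \in Lset a :|: [set a])%:R.

Definition psi m r (m0 : nat) (j : 'I_r.+1) (a : Zm m.-1 r) : Zm m r :=
  [ffun i : 'I_m => if val i == m0.-1 then j else
     if @insub _ (fun k => k < m.-1)%N 'I_m.-1 (unbump m0.-1 i) is Some k
     then a k else j].

Definition Aj m r (m0 t1 : nat) (j : 'I_r.+1) : {set Zm m r} :=
  [set a in Omega m r t1 | [exists i : 'I_m, (val i == m0.-1) && (a i == j)]].

(* Main.v *)
Require Import Defs.
From HB Require Import structures.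
From mathcomp Require Import all_boot all_order all_algebra zify.
Import GRing.Theory.
Local Open Scope ring_scope.

Section S.
Variables (n r p : nat) (hp : (p <= n)%N).
Local Notation h := (inord p : 'I_n.+1).

Lemma val_h : nat_of_ord h = p. Proof. by rewrite inordK. Qed.

Definition del (c : Zm n.+1 r) : Zm n r := [ffun k : 'I_n => c (lift h k)].

Lemma psi_h j a : @psi n.+1 r p.+1 j a h = j.
Proof. by rewrite ffunE /= val_h eqxx. Qed.

Lemma psi_lift j a k : @psi n.+1 r p.+1 j a (lift h k) = a k.
Proof.
rewrite ffunE /= val_h eq_sym (negbTE (neq_bump _ _)) bumpK.
case: insubP => [k' _ /= Hk|]; first by congr (a _); apply: val_inj.
by rewrite ltn_ord.
Qed.

Lemma psi_del (c : Zm n.+1 r) : @psi n.+1 r p.+1 (c h) (del c) = c.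
Proof.
apply/ffunP => i; case: (unliftP h i) => [k ->|->]; last by rewrite psi_h.
by rewrite psi_lift ffunE.
Qed.

Lemma del_psi j a : del (@psi n.+1 r p.+1 j a) = a.
Proof. by apply/ffunP => k; rewrite ffunE psi_lift. Qed.

Lemma psi_inj j : injective (@psi n.+1 r p.+1 j).
Proof. by move=> a b E; rewrite -(del_psi j a) E del_psi. Qed.

Lemma forall_split (P : pred 'I_n.+1) :
  [forall i, P i] = P h && [forall k, P (lift h k)].
Proof.
apply/forallP/andP => [H|[H1 /forallP H2] i]; first by split; [|apply/forallP].
by case: (unliftP h i) => [k ->|->].
Qed.

Lemma Lset_psi k a (c : Zm n.+1 r) : (c \in Lset (@psi n.+1 r p.+1 k a)) =
  [&& c h != ord_max, (k != ord_max) ==> (c h == k) & del c \in Lset a].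
Proof.
rewrite /Lset !inE (forall_split (fun i => c i != ord_max)).
rewrite (forall_split (fun i => _ ==> _)) /Tset !inE psi_h.

have E1 : [forall k0, c (lift h k0) != ord_max] = [forall i, del c i != ord_max].
  by apply: eq_forallb => i; rewrite ffunE.
have E2 : [forall k0, (lift h k0 \in [set i | @psi n.+1 r p.+1 k a i != ord_max]) ==>
         (c (lift h k0) == @psi n.+1 r p.+1 k a (lift h k0))] =
   [forall i, (i \in [set i0 | a i0 != ord_max]) ==> (del c i == a i)].
  by apply: eq_forallb => i; rewrite !inE psi_lift ffunE.
rewrite E1 E2.
by case: (c h != ord_max); case: (_ ==> _); case: [forall _, _]; case: [forall _, _].
Qed.

Lemma mem_imset_psi j (S : {set Zm n r}) (c : Zm n.+1 r) :
  (c \in @psi n.+1 r p.+1 j @: S) = (c h == j) && (del c \in S).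
Proof.
apply/imsetP/andP => [[a aS ->]|[/eqP <- dS]]; first by rewrite psi_h del_psi.
by exists (del c); rewrite ?psi_del.
Qed.

Definition bit (l i : nat) := odd (l %/ 2 ^ i).

Lemma bit_small l i : (l < 2 ^ i)%N -> bit l i = false.
Proof. by move=> H; rewrite /bit divn_small. Qed.

Lemma KB1 (b : bool) l : (l < 2 ^ p)%N -> bit (b * 2 ^ p + l) p = b.
Proof.
move=> H; rewrite /bit divnDl ?dvdn_mull // (divn_small H) addn0 mulnK ?expn_gt0 //.
by case: b.
Qed.

Lemma KB2 (b : bool) l k : (l < 2 ^ p)%N -> bit (b * 2 ^ p + l) (bump p k) = bit l k.
Proof.
move=> H; rewrite /bump; case: leqP => hk.
  rewrite !bit_small //; first by apply: leq_trans H _; rewrite leq_exp2l.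
  rewrite add1n expnS mul2n -addnn; apply: leq_trans (_ : b * 2 ^ p + 2 ^ p <= _)%N.
    by rewrite ltn_add2l.
  by apply: leq_add; rewrite ?leq_exp2l //; case: b; rewrite ?mul1n ?mul0n ?leq_exp2l.
have -> : (false + k = k)%N by [].
rewrite /bit divnDl; last by rewrite dvdn_mull // dvdn_exp2l // ltnW.
rewrite oddD; case: b; rewrite ?mul0n ?div0n //= mul1n.
rewrite -(subnK (ltnW hk)) expnD mulnK ?expn_gt0 // oddX.
by rewrite subn_eq0 leqNgt hk.
Qed.

Lemma bit_low l : (l < 2 ^ p.+1)%N -> bit l p = false -> (l < 2 ^ p)%N.
Proof.
move=> H; rewrite /bit.
have : (l %/ 2 ^ p < 2)%N.
  by rewrite ltn_divLR ?expn_gt0 // -ssrnat.expnS.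
case E: (l %/ 2 ^ p)%N => [|[|//]] // _ _.
have : (l %/ 2 ^ p < 1)%N by rewrite E.
by rewrite ltn_divLR ?expn_gt0 // mul1n.
Qed.

Lemma PS j a l : (l < 2 ^ p)%N ->
  (Uset (@psi n.+1 r p.+1 j a) == supp n.+1 ((j == ord_max) * 2 ^ p + l)%N) =
  (Uset a == supp n l).
Proof.
move=> H; apply/eqP/eqP => E.
  apply/setP => k; move/setP: E => /(_ (lift h k)).
  by rewrite !inE psi_lift /= val_h -/(bit _ _) KB2.
apply/setP => i; move/setP: E => E.
case: (unliftP h i) => [k ->|->]; rewrite !inE ?psi_lift ?psi_h /= ?val_h.
  by rewrite -/(bit _ _) KB2 //; have := E k; rewrite !inE.
by have := KB1 (j == ord_max) l H; rewrite /bit.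
Qed.
End S.

Lemma OmegaP m r s (a : Zm m r) :
  reflect (exists2 l, (l <= s)%N & Uset a = supp m l) (a \in Omega m r s).
Proof.
rewrite /Omega; apply: (iffP bigcupP) => [[l _]|[l ls E]].
  by rewrite inE => /eqP E; exists l => //; rewrite -ltnS.
by exists (Ordinal (ls : (l < s.+1)%N)); rewrite // inE E.
Qed.

Lemma Omega0P m r (a : Zm m r) : (a \in Omega m r 0) = [forall i, a i != ord_max].
Proof.
apply/OmegaP/forallP => [[l]|H].
  rewrite leqn0 => /eqP -> /setP E i; have := E i; rewrite !inE div0n /=.
  by move=> ->.
exists 0%N => //; apply/setP => i; rewrite !inE div0n /=.
by apply/negbTE.
Qed.

Lemma Omega_mono m r s s' (a : Zm m r) : (s <= s')%N ->
  a \in Omega m r s -> a \in Omega m r s'.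
Proof.
by move=> ss /OmegaP [l ls E]; apply/OmegaP; exists l => //; apply: leq_trans ss.
Qed.


Lemma Lset_all m r (a b : Zm m r) : b \in Lset a -> [forall i, b i != ord_max].
Proof. by rewrite inE => /andP[]. Qed.

Lemma Lset_self m r (b : Zm m r) : [forall i, b i != ord_max] -> Lset b = [set b].
Proof.
move=> hb; apply/setP => b'; rewrite !inE; apply/andP/eqP => [[_ /forallP H]|->].
  apply/ffunP => i; apply/eqP; have := H i; by rewrite inE (forallP hb i).
by split=> //; apply/forallP => i; apply/implyP.
Qed.

Lemma Gpar m r t (C : {set word m r t})
  (hH : forall a : Zm m r, a \in Omega m r t :\: Omega m r 0 ->
        forall x, x \in C -> \sum_(b : Idx m r t) Hentry a (val b) * x b = 0)
  x (xC : x \in C) a (aO : a \in Omega m r t :\: Omega m r 0) :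
  xat x a = \sum_(c in Lset a) xat x c.
Proof.
have := hH a aO x xC.
have -> : \sum_(b : Idx m r t) Hentry a (val b) * x b =
          \sum_(c in Omega m r t) Hentry a c * xat x c.
  rewrite (big_sub (Omega m r t) (fun c => Hentry a c * xat x c)).
  by apply: eq_bigr => b _; rewrite /xat valK.
have -> : \sum_(c in Omega m r t) Hentry a c * xat x c =
          \sum_(c in Lset a :|: [set a]) xat x c.
  rewrite big_mkcond [RHS]big_mkcond; apply: eq_bigr => c _.
  rewrite /Hentry; case: ifP => cO; case: ifP => cS //=; rewrite ?mul1r ?mul0r //.
  by rewrite /xat insubF.
rewrite setUC big_setU1 /=; last first.
  apply/negP => /Lset_all; rewrite -Omega0P; by case/setDP: aO => _ /negP.
move/eqP; rewrite addr_eq0 => /eqP ->; by rewrite oppr_pchar2 // pchar_Fp.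
Qed.

Section S2.
Variables (n r p : nat) (hp : (p <= n)%N).
Local Notation h := (inord p : 'I_n.+1).
Local Notation ps := (@psi n.+1 r p.+1).
Local Notation dl := (@del n r p).

Lemma O1 j (a : Zm n r) s : j != ord_max -> (s < 2 ^ p)%N ->
  (ps j a \in Omega n.+1 r s) = (a \in Omega n r s).
Proof.
move=> jr sp; apply/OmegaP/OmegaP => [[l ls E]|[l ls E]].
  have ll : (l < 2 ^ p)%N by apply: leq_ltn_trans sp.
  exists l => //; apply/eqP; rewrite -(@PS n r p hp j a l ll) (negbTE jr) mul0n add0n E //.
have ll : (l < 2 ^ p)%N by apply: leq_ltn_trans sp.
have P := @PS n r p hp j a l ll.
rewrite (negbTE jr) mul0n add0n E eqxx in P.
by exists l => //; apply/eqP; rewrite P.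
Qed.

Lemma O2a (a : Zm n r) t : (2 ^ p - 1 < t <= 2 ^ p.+1 - 1)%N ->
  a \in Omega n r (t - (2 ^ p - 1) - 1) ->
  (ps ord_max a \in Omega n.+1 r t) && (ps ord_max a \notin Omega n.+1 r (2 ^ p - 1)).
Proof.
move=> /andP[t1 t2] /OmegaP [l ls E].
have X0 : (0 < 2 ^ p)%N by rewrite expn_gt0.
have XS : (2 ^ p.+1 = 2 * 2 ^ p)%N by rewrite ssrnat.expnS.
rewrite XS in t2.
have [ll lt] : (l < 2 ^ p)%N /\ (2 ^ p + l <= t)%N.
  by move: X0 t1 t2 ls; generalize (2 ^ p)%N => X *; split; lia.
apply/andP; split.
  apply/OmegaP; exists (true * 2 ^ p + l)%N; first by rewrite mul1n.
  have P := @PS n r p hp ord_max a l ll; rewrite (eqxx (ord_max : 'I_r.+1)) in P.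
  by apply/eqP; rewrite P E.
apply/negP => /OmegaP [l' l's E'].
have : h \in Uset (ps ord_max a) by rewrite inE (@psi_h n r p hp).
have l'p : (l' < 2 ^ p)%N by move: X0 l's; generalize (2 ^ p)%N => X *; lia.
rewrite E' inE (@val_h n p hp) => H; have := @bit_small l' p l'p; by rewrite /bit H.
Qed.

Lemma O2b (c : Zm n.+1 r) t : (2 ^ p - 1 < t <= 2 ^ p.+1 - 1)%N ->
  c \in Omega n.+1 r t -> c \notin Omega n.+1 r (2 ^ p - 1) ->
  c h = ord_max /\ dl c \in Omega n r (t - (2 ^ p - 1) - 1).
Proof.
move=> /andP[t1 t2] /OmegaP [l ls E] cN.
have X0 : (0 < 2 ^ p)%N by rewrite expn_gt0.
have XS : (2 ^ p.+1 = 2 * 2 ^ p)%N by rewrite ssrnat.expnS.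
have lt : (l < 2 ^ p.+1)%N.
  by rewrite XS in t2 *; move: X0 t1 t2 ls; generalize (2 ^ p)%N => X *; lia.
have bl : bit l p.
  case bf: (bit l p) => //; have ll := @bit_low p l lt bf.
  move/negP: cN; case; by apply/OmegaP; exists l => //; move: X0 ll; generalize (2 ^ p)%N => X *; lia.
have ch : c h = ord_max.
  apply/eqP; have : h \in Uset c by rewrite E inE (@val_h n p hp).
  by rewrite inE.
have lp : (2 ^ p <= l)%N.
  by rewrite leqNgt; apply/negP => /bit_small; rewrite bl.
split => //; apply/OmegaP; exists (l - 2 ^ p)%N.
  by rewrite XS in t2; move: X0 t1 t2 ls lp; generalize (2 ^ p)%N => X *; lia.
have ll : (l - 2 ^ p < 2 ^ p)%N.
  by rewrite XS in lt; move: X0 lt lp; generalize (2 ^ p)%N => X *; lia.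
have P := @PS n r p hp ord_max (dl c) (l - 2 ^ p)%N ll.
rewrite (eqxx (ord_max : 'I_r.+1)) mul1n subnKC // -ch (@psi_del n r p hp) E eqxx in P.
by apply/eqP; rewrite -P.
Qed.

Lemma imA j : j != ord_max ->
  ps j @: Omega n r (2 ^ p - 1) = @Aj n.+1 r p.+1 (2 ^ p - 1) j.
Proof.
move=> jr; apply/setP => c; rewrite (@mem_imset_psi n r p hp) /Aj inE.
have -> : [exists i : 'I_n.+1, (val i == p.+1.-1) && (c i == j)] = (c h == j).
  apply/existsP/idP => [[i /andP[/eqP hi ci]]|ch]; last by exists h; rewrite /= (@val_h n p hp) eqxx.
  by have -> : h = i by apply: val_inj; rewrite /= (@val_h n p hp).
case: (c h =P j) => [ch|]; rewrite ?andbF ?andbT //=.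
have -> : (c \in Omega n.+1 r (2 ^ p - 1)) = (ps j (dl c) \in Omega n.+1 r (2 ^ p - 1)).
  by rewrite -ch (@psi_del n r p hp c).
rewrite O1 //.
have X0 : (0 < 2 ^ p)%N by rewrite expn_gt0.
by move: X0; generalize (2 ^ p)%N => X *; lia.
Qed.

Lemma Dsum (a : Zm n r) (F : Zm n.+1 r -> 'F_2) :
  \sum_(c in Lset (ps ord_max a)) F c =
  \sum_(j | j != ord_max) \sum_(b in Lset a) F (ps j b).
Proof.
rewrite (partition_big (fun c : Zm n.+1 r => c h) (fun j => j != ord_max)) /=; last first.
  by move=> c; rewrite (@Lset_psi n r p hp) => /and3P[].
apply: eq_bigr => j jr.
transitivity (\sum_(c in ps j @: Lset a) F c).
  2: by rewrite big_imset //= => ? ? _ _; apply: (@psi_inj n r p hp j).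
apply: eq_bigl => c; rewrite (@Lset_psi n r p hp) (@mem_imset_psi n r p hp).
rewrite (eqxx (ord_max : 'I_r.+1)) /=.
by case: (c h =P j) => [->|_]; rewrite ?eqxx ?jr ?andbF ?andbT.
Qed.
End S2.

Theorem lemma7 (r m t m0 : nat) (C : {set word m r t})
  (hr : (2 <= r)%N) (hm : (1 < m)%N) (ht1 : (1 <= t)%N) (ht2 : (t <= 2 ^ m - 1)%N)
  (hC0 : 0 \in C) (hCD : forall x y, x \in C -> y \in C -> x + y \in C)
  (hH : forall a : Zm m r, a \in Omega m r t :\: Omega m r 0 ->
        forall x, x \in C -> \sum_(b : Idx m r t) Hentry a (val b) * x b = 0)
  (hm0 : (1 <= m0 <= m)%N)
  (hm0t : (2 ^ m0.-1 - 1 < t <= 2 ^ m0 - 1)%N) :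
  let t1 := (2 ^ m0.-1 - 1)%N in
  let t2 := (t - t1 - 1)%N in
  let B := Omega m r t :\: Omega m r t1 in
  (forall j : 'I_r.+1, j != ord_max ->
     {in Omega m.-1 r t1 &, injective (@psi m r m0 j)} /\
     @psi m r m0 j @: Omega m.-1 r t1 = @Aj m r m0 t1 j /\
     (forall x, x \in C -> forall a, a \in Omega m.-1 r t1 :\: Omega m.-1 r 0 ->
        xat x (@psi m r m0 j a) = \sum_(b in Lset a) xat x (@psi m r m0 j b))) /\
  ((1 <= t2)%N ->
     {in Omega m.-1 r t2 &, injective (@psi m r m0 ord_max)} /\
     @psi m r m0 ord_max @: Omega m.-1 r t2 = B /\
     (forall x, x \in C -> forall a, a \in Omega m.-1 r t2 :\: Omega m.-1 r 0 ->
        xat x (@psi m r m0 ord_max a) = \sum_(b in Lset a) xat x (@psi m r m0 ord_max b))).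
Proof.
move=> t1 t2 B; rewrite {}/B {}/t2 {}/t1.
destruct m as [|n]; first by [].
destruct m0 as [|p]; first by [].
have hp : (p <= n)%N by case/andP: hm0.
have X0 : (0 < 2 ^ p)%N by rewrite expn_gt0.
have t1t : (2 ^ p - 1 <= t)%N by case/andP: hm0t => /ltnW.
split.
  move=> j jr; split; first by move=> a b _ _; apply: (@psi_inj n r p hp j).
  split; first exact: (@imA n r p hp j jr).
  move=> x xC a /setDP [aO a0].
  have jaO : @psi n.+1 r p.+1 j a \in Omega n.+1 r t :\: Omega n.+1 r 0.
    apply/setDP; split.
      apply: (@Omega_mono _ _ _ _ _ t1t).
      rewrite (@O1 n r p hp j a _ jr) //.
      by move: X0; generalize (2 ^ p)%N => X *; lia.
    rewrite Omega0P; rewrite Omega0P in a0.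
    move/forallPn: a0 => [k]; rewrite negbK => ak.
    by apply/forallPn; exists (lift (inord p) k); rewrite (@psi_lift n r p hp) negbK.
  rewrite (@Gpar _ _ _ C hH x xC _ jaO).
  transitivity (\sum_(c in @psi n.+1 r p.+1 j @: Lset a) xat x c).
    apply: eq_bigl => c; rewrite (@Lset_psi n r p hp) (@mem_imset_psi n r p hp) jr /=.
    by case: (c (inord p) =P j) => [->|_]; rewrite ?jr ?andbF ?andbT.
  by rewrite big_imset //= => ? ? _ _; apply: (@psi_inj n r p hp j).
move=> t2pos; split; first by move=> a b _ _; apply: (@psi_inj n r p hp ord_max).
have Pm : forall b, b \in Omega n r (t - (2 ^ p - 1) - 1) ->
    @psi n.+1 r p.+1 ord_max b \in Omega n.+1 r t :\: Omega n.+1 r 0.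
  move=> b bO; have /andP[A1 A2] := @O2a n r p hp b t hm0t bO.
  apply/setDP; split => //; apply/negP => /(@Omega_mono _ _ _ _ _ (leq0n (2 ^ p - 1))).
  exact/negP.
split.
  apply/setP => c; apply/imsetP/idP => [[a aO ->]|cB].
    by have /andP[A1 A2] := @O2a n r p hp a t hm0t aO; rewrite inE A1 A2.
  case/setDP: cB => cO cN; have [ch dO] := @O2b n r p hp c t hm0t cO cN.
  by exists (del n r p c) => //; rewrite -ch (@psi_del n r p hp).
move=> x xC a /setDP [aO a0].
rewrite (@Gpar _ _ _ C hH x xC _ (Pm a aO)) (@Dsum n r p hp) exchange_big /=.
apply: eq_bigr => b bL.
have bO : b \in Omega n r (t - (2 ^ p - 1) - 1).
  by apply: (@Omega_mono _ _ _ _ _ (leq0n _)); rewrite Omega0P; exact: Lset_all bL.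
rewrite (@Gpar _ _ _ C hH x xC _ (Pm b bO)) (@Dsum n r p hp).
apply: eq_bigr => j _; rewrite Lset_self ?big_set1 //; exact: Lset_all bL.
Qed.
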